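(* Let $H_0$ be the solution of $H_0'' = -Q(t)^2H_0$ for $t > 0$ with $H_0(0) = 0$, $H_0'(0) = -1$, and let $\tau_0 > 0$ be its first positive zero. Let $p$ solve $$p''(t) = -Q(t+\tau_0)^2\,p(t), \quad t > 0, \qquad p(0) = 0,\ p'(0) = 1.$$ Then $p(t) > 0$ for all $0 < t < \infty$. Furthermore, there is a constant $c_1 > 0$ with $\min_{t \ge 1} p(t) \ge c_1$.
   Context: $Q(t)$, $t\ge 0$, denotes the radial profile of the positive radial ground state of $\Delta\phi - \phi + |\phi|^2\phi = 0$ on $\mathbb{R}^3$; it solves $-Q'' - \frac{2}{t}Q' + Q - Q^3 = 0$. The first positive zero $\tau_0$ of $H_0$ exists; this is the case $\epsilon = 0$ of the paper's sign-change lemma for $H_\epsilon$. *)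

(* Defs.v *)
From Stdlib Require Import Reals.
From Coquelicot Require Import Coquelicot.
Open Scope R_scope.

(* Q is the radial profile of the positive radial ground state of
   Delta phi - phi + phi^3 = 0 on R^3.  We represent the profile by its even
   extension to all of R (a smooth radial function on R^3 has an even smooth
   profile; evenness encodes Q'(0) = 0).  Q is twice differentiable, positive,
   tends to 0 at infinity, and solves -Q'' - (2/t) Q' + Q - Q^3 = 0 for t > 0.
   By Kwong's uniqueness theorem these conditions determine Q uniquely. *)
Definition is_ground_state_profile (Q : R -> R) : Prop :=
  exists Q1 Q2 : R -> R,
    (forall t, is_derive Q t (Q1 t)) /\
    (forall t, is_derive Q1 t (Q2 t)) /\
    (forall t, Q (- t) = Q t) /\
    (forall t, 0 < Q t) /\
    is_lim Q p_infty 0 /\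
    (forall t, 0 < t -> - Q2 t - (2 / t) * Q1 t + Q t - (Q t) ^ 3 = 0).

Definition solves_ode (V f : R -> R) (a b : R) : Prop :=
  exists f1 : R -> R,
    (forall t, is_derive f t (f1 t)) /\
    (forall t, is_derive f1 t (- V t * f t)) /\
    f 0 = a /\ f1 0 = b.

(* Main.v *)
Require Import Defs.
From Stdlib Require Import Reals Lra Psatz.
From Coquelicot Require Import Coquelicot.
Open Scope R_scope.

Lemma der_sign f x d : is_derive f x d -> d <> 0 ->
  exists del, 0 < del /\ forall h, h <> 0 -> Rabs h < del ->
    0 < (f (x + h) - f x) * h * d.
Proof.
  intros Hd Hd0. apply is_derive_Reals in Hd.
  destruct (Hd (Rabs d) (Rabs_pos_lt _ Hd0)) as [del Hdel].
  exists del. split; [apply cond_pos|]. intros h Hh Hhd.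
  specialize (Hdel h Hh Hhd).
  set (q := (f (x + h) - f x) / h) in Hdel.
  assert (E : f (x + h) - f x = q * h) by (unfold q; field; auto).
  rewrite E.
  assert (0 < q * d).
  { destruct (Rcase_abs d) as [Hn|Hp].
    - rewrite (Rabs_left d) in Hdel by lra.
      apply Rabs_def2 in Hdel. nra.
    - rewrite (Rabs_right d) in Hdel by lra.
      apply Rabs_def2 in Hdel. nra. }
  assert (0 < h * h) by (apply Rsqr_pos_lt in Hh; unfold Rsqr in Hh; lra).
  nra.
Qed.

Lemma der_pos_right f x d : is_derive f x d -> 0 < d ->
  exists del, 0 < del /\ forall t, x < t < x + del -> f x < f t.
Proof.
  intros H Hd. destruct (der_sign f x d H ltac:(lra)) as [del [Hdel P]].
  exists del; split; auto. intros t Ht.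
  specialize (P (t - x) ltac:(lra) ltac:(rewrite Rabs_right; lra)).
  replace (x + (t - x)) with t in P by ring.
  assert (0 < (t - x) * d) by nra. nra.
Qed.

Lemma der_pos_left f x d : is_derive f x d -> 0 < d ->
  exists del, 0 < del /\ forall t, x - del < t < x -> f t < f x.
Proof.
  intros H Hd. destruct (der_sign f x d H ltac:(lra)) as [del [Hdel P]].
  exists del; split; auto. intros t Ht.
  specialize (P (t - x) ltac:(lra) ltac:(rewrite Rabs_left; lra)).
  replace (x + (t - x)) with t in P by ring.
  assert (0 < (x - t) * d) by nra. nra.
Qed.

Lemma der_neg_right f x d : is_derive f x d -> d < 0 ->
  exists del, 0 < del /\ forall t, x < t < x + del -> f t < f x.
Proof.
  intros H Hd. destruct (der_sign f x d H ltac:(lra)) as [del [Hdel P]].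
  exists del; split; auto. intros t Ht.
  specialize (P (t - x) ltac:(lra) ltac:(rewrite Rabs_right; lra)).
  replace (x + (t - x)) with t in P by ring.
  assert (0 < (t - x) * (- d)) by nra. nra.
Qed.

Lemma der_neg_left f x d : is_derive f x d -> d < 0 ->
  exists del, 0 < del /\ forall t, x - del < t < x -> f x < f t.
Proof.
  intros H Hd. destruct (der_sign f x d H ltac:(lra)) as [del [Hdel P]].
  exists del; split; auto. intros t Ht.
  specialize (P (t - x) ltac:(lra) ltac:(rewrite Rabs_left; lra)).
  replace (x + (t - x)) with t in P by ring.
  assert (0 < (x - t) * (- d)) by nra. nra.
Qed.

Lemma mvt f f' a b : a < b -> (forall c, a <= c <= b -> is_derive f c (f' c)) ->
  exists c, f b - f a = f' c * (b - a) /\ a < c < b.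
Proof.
  intros Hab H. apply MVT_cor2; auto. intros c Hc. apply is_derive_Reals; auto.
Qed.

Lemma mono_nonneg f f' a b : a <= b -> (forall c, a <= c <= b -> is_derive f c (f' c)) ->
  (forall c, a < c < b -> 0 <= f' c) -> f a <= f b.
Proof.
  intros Hab H Hp. destruct (Req_dec a b) as [E|E]; [subst; lra|].
  destruct (mvt f f' a b ltac:(lra) H) as [c [Hc Hc2]].
  specialize (Hp c Hc2). nra.
Qed.

Lemma cont_of_der f f' : (forall t, is_derive f t (f' t)) -> continuity f.
Proof.
  intros H x. apply derivable_continuous_pt. exists (f' x). apply is_derive_Reals; auto.
Qed.

Lemma D_mult f g x df dg : is_derive f x df -> is_derive g x dg ->
  is_derive (fun t => f t * g t) x (df * g x + f x * dg).
Proof. intros. apply (is_derive_mult f g x df dg); auto. intros; apply Rmult_comm. Qed.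
Lemma D_plus f g x df dg : is_derive f x df -> is_derive g x dg ->
  is_derive (fun t => f t + g t) x (df + dg).
Proof. intros. apply (is_derive_plus f g x df dg); auto. Qed.
Lemma D_minus f g x df dg : is_derive f x df -> is_derive g x dg ->
  is_derive (fun t => f t - g t) x (df - dg).
Proof. intros. apply (is_derive_minus f g x df dg); auto. Qed.
Lemma D_const (c x : R) : is_derive (fun _ => c) x 0.
Proof. apply is_derive_Reals, derivable_pt_lim_const. Qed.
Lemma D_id (x : R) : is_derive (fun t => t) x 1.
Proof. apply is_derive_Reals, derivable_pt_lim_id. Qed.
Lemma D_shift (f : R -> R) (a x df : R) : is_derive f (x + a) df -> is_derive (fun t => f (t + a)) x df.
Proof.
  intros H. apply is_derive_Reals in H. apply is_derive_Reals.
  intros e He. destruct (H e He) as [d Hd]. exists d. intros h H1 H2.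
  replace (x + h + a) with (x + a + h) by ring. auto.
Qed.
Lemma D_eq (f : R -> R) (x l l' : R) : is_derive f x l -> l = l' -> is_derive f x l'.
Proof. intros; subst; auto. Qed.

Ltac fixD := repeat match goal with |- context [Derive ?F ?t0] =>
  match F with (fun x => ?f x) => match goal with H : forall u, is_derive f u _ |- _ =>
    match type of (H t0) with is_derive _ _ ?l =>
      replace (Derive F t0) with l by (symmetry; apply is_derive_unique; exact (H t0)) end end end end.
Ltac exD1 := match goal with |- ex_derive (fun x => ?f x) ?t0 =>
  match goal with H : forall u, is_derive f u _ |- _ => exact (ex_intro _ _ (H t0)) end end.
Ltac exD := repeat split; try exD1.

Definition GS (Q Q1 Q2 : R -> R) : Prop :=
    (forall t, is_derive Q t (Q1 t)) /\
    (forall t, is_derive Q1 t (Q2 t)) /\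
    (forall t, Q (- t) = Q t) /\
    (forall t, 0 < Q t) /\
    is_lim Q p_infty 0 /\
    (forall t, 0 < t -> - Q2 t - (2 / t) * Q1 t + Q t - (Q t) ^ 3 = 0).

Definition En (Q Q1 : R -> R) t := Q1 t ^ 2 / 2 - Q t ^ 2 / 2 + Q t ^ 4 / 4.

Lemma Q1_0 Q Q1 Q2 : GS Q Q1 Q2 -> Q1 0 = 0.
Proof.
  intros (HQ & HQ1 & Hev & Hpos & Hlim & Hode).
  destruct (Rtotal_order (Q1 0) 0) as [Hn|[E|Hp]]; auto; exfalso.
  - destruct (der_neg_right Q 0 _ (HQ 0) Hn) as [d1 [Hd1 P1]].
    destruct (der_neg_left Q 0 _ (HQ 0) Hn) as [d2 [Hd2 P2]].
    set (e := Rmin d1 d2 / 2).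
    assert (0 < e) by (unfold e, Rmin; destruct Rle_dec; lra).
    assert (e < d1) by (unfold e; pose proof (Rmin_l d1 d2); lra).
    assert (e < d2) by (unfold e; pose proof (Rmin_r d1 d2); lra).
    specialize (P1 e ltac:(lra)). specialize (P2 (- e) ltac:(lra)).
    rewrite Hev in P2. lra.
  - destruct (der_pos_right Q 0 _ (HQ 0) Hp) as [d1 [Hd1 P1]].
    destruct (der_pos_left Q 0 _ (HQ 0) Hp) as [d2 [Hd2 P2]].
    set (e := Rmin d1 d2 / 2).
    assert (0 < e) by (unfold e, Rmin; destruct Rle_dec; lra).
    assert (e < d1) by (unfold e; pose proof (Rmin_l d1 d2); lra).
    assert (e < d2) by (unfold e; pose proof (Rmin_r d1 d2); lra).
    specialize (P1 e ltac:(lra)). specialize (P2 (- e) ltac:(lra)).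
    rewrite Hev in P2. lra.
Qed.

Lemma E_mono Q Q1 Q2 : GS Q Q1 Q2 -> forall a b, 0 <= a <= b -> En Q Q1 b <= En Q Q1 a.
Proof.
  intros G a b Hab. pose proof (Q1_0 _ _ _ G) as H0.
  destruct G as (HQ & HQ1 & Hev & Hpos & Hlim & Hode).
  cut (- En Q Q1 a <= - En Q Q1 b); [lra|].
  apply (mono_nonneg (fun t => - En Q Q1 t) (fun t => - (Q1 t * (Q2 t - Q t + Q t ^ 3)))).
  - lra.
  - intros c _. unfold En. auto_derive; [exD|]. fixD. field.
  - intros c Hc. specialize (Hode c ltac:(lra)).
    replace (Q2 c - Q c + Q c ^ 3) with (- (2 / c) * Q1 c) by lra.
    assert (0 <= Q1 c * Q1 c) by nra.
    assert (0 < / c) by (apply Rinv_0_lt_compat; lra).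
    unfold Rdiv. nra.
Qed.

Lemma E_nonneg Q Q1 Q2 : GS Q Q1 Q2 -> forall t, 0 <= t -> 0 <= En Q Q1 t.
Proof.
  intros G t Ht. pose proof (E_mono _ _ _ G) as EM.
  destruct G as (HQ & HQ1 & Hev & Hpos & Hlim & Hode).
  destruct (Rle_lt_dec 0 (En Q Q1 t)) as [|Hn]; auto. exfalso.
  apply is_lim_spec in Hlim.
  set (eps := Rmin 1 (- En Q Q1 t)).
  assert (Heps : 0 < eps) by (unfold eps, Rmin; destruct Rle_dec; lra).
  destruct (Hlim (mkposreal eps Heps)) as [M HM].
  set (u := Rmax t M + 1).
  assert (t <= u) by (unfold u; pose proof (Rmax_l t M); lra).
  assert (M < u) by (unfold u; pose proof (Rmax_r t M); lra).
  specialize (HM u H0). simpl in HM.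
  specialize (EM t u ltac:(lra)).
  specialize (Hpos u).
  rewrite Rminus_0_r, Rabs_right in HM by lra.
  assert (eps <= 1) by apply Rmin_l.
  assert (eps <= - En Q Q1 t) by apply Rmin_r.
  unfold En in *.
  assert (0 <= Q1 u ^ 2) by nra.
  assert (0 <= Q u ^ 4) by nra.
  assert (Q u ^ 2 <= Q u) by nra.
  nra.
Qed.

Lemma Q1_nonpos Q Q1 Q2 : GS Q Q1 Q2 -> forall s, 0 < s -> Q1 s <= 0.
Proof.
  intros G s Hs. pose proof (E_mono _ _ _ G) as EM. pose proof (E_nonneg _ _ _ G) as EN.
  pose proof (Q1_0 _ _ _ G) as H0.
  destruct G as (HQ & HQ1 & Hev & Hpos & Hlim & Hode).
  destruct (Rle_lt_dec (Q1 s) 0) as [|Hp]; auto. exfalso.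
  destruct (continuity_ab_min Q 0 s ltac:(lra)) as [m [Hm Hm2]].
  { intros c _. apply (cont_of_der Q Q1 HQ). }
  assert (Hc : Q1 m = 0).
  { destruct (Req_dec m 0) as [->|Hm0]; auto.
    destruct (Req_dec m s) as [->|Hms].
    - exfalso. destruct (der_pos_left Q s _ (HQ s) Hp) as [d [Hd P]].
      set (t := s - Rmin d s / 2).
      assert (0 < Rmin d s) by (unfold Rmin; destruct Rle_dec; lra).
      pose proof (Rmin_l d s). pose proof (Rmin_r d s).
      specialize (P t ltac:(unfold t; lra)). specialize (Hm t ltac:(unfold t; lra)). lra.
    - destruct (Rtotal_order (Q1 m) 0) as [Hn|[E|Hp']]; auto; exfalso.
      + destruct (der_neg_right Q m _ (HQ m) Hn) as [d [Hd P]].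
        set (t := m + Rmin d (s - m) / 2).
        assert (0 < Rmin d (s - m)) by (unfold Rmin; destruct Rle_dec; lra).
        pose proof (Rmin_l d (s - m)). pose proof (Rmin_r d (s - m)).
        specialize (P t ltac:(unfold t; lra)). specialize (Hm t ltac:(unfold t; lra)). lra.
      + destruct (der_pos_left Q m _ (HQ m) Hp') as [d [Hd P]].
        set (t := m - Rmin d m / 2).
        assert (0 < Rmin d m) by (unfold Rmin; destruct Rle_dec; lra).
        pose proof (Rmin_l d m). pose proof (Rmin_r d m).
        specialize (P t ltac:(unfold t; lra)). specialize (Hm t ltac:(unfold t; lra)). lra. }
  specialize (EN m ltac:(lra)). specialize (EM m s ltac:(lra)).
  specialize (Hm s ltac:(lra)).
  unfold En in *. rewrite Hc in EN, EM.
  pose proof (Hpos m). pose proof (Hpos s).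
  set (x := Q s) in *. set (y := Q m) in *.
  assert (Hyy : y ^ 2 * (y ^ 2 - 2) >= 0) by (simpl in *; nra).
  assert (0 < y ^ 2) by (simpl; nra).
  assert (Hy2 : 2 <= y ^ 2).
  { destruct (Rle_lt_dec 2 (y^2)); auto. nra. }
  assert (x ^ 2 - y ^ 2 >= 0) by nra.
  assert ((x^2 - y^2) * (x^2 + y^2 - 2) >= 0) by nra.
  assert (0 < Q1 s ^ 2) by nra.
  nra.
Qed.

Lemma Q1_neg Q Q1 Q2 : GS Q Q1 Q2 -> forall s, 0 < s -> Q1 s < 0.
Proof.
  intros G s Hs. pose proof (E_nonneg _ _ _ G) as EN. pose proof (Q1_nonpos _ _ _ G) as NP.
  destruct G as (HQ & HQ1 & Hev & Hpos & Hlim & Hode).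
  destruct (NP s Hs) as [|E]; auto. exfalso.
  specialize (EN s ltac:(lra)). unfold En in EN. rewrite E in EN.
  pose proof (Hpos s).
  assert (Hyy : Q s ^ 2 * (Q s ^ 2 - 2) >= 0) by (simpl in *; nra).
  assert (0 < Q s ^ 2) by (simpl; nra).
  assert (2 <= Q s ^ 2).
  { destruct (Rle_lt_dec 2 (Q s^2)); auto. nra. }
  specialize (Hode s Hs). rewrite E in Hode.
  assert (Hq2 : Q2 s < 0) by nra.
  destruct (der_neg_left Q1 s _ (HQ1 s) Hq2) as [d [Hd P]].
  assert (0 < Rmin d s) by (unfold Rmin; destruct Rle_dec; lra).
  pose proof (Rmin_l d s). pose proof (Rmin_r d s).
  set (t := s - Rmin d s / 2).
  specialize (P t ltac:(unfold t; lra)). specialize (NP t ltac:(unfold t; lra)). lra.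
Qed.

Lemma Q_decr Q Q1 Q2 : GS Q Q1 Q2 -> forall a b, 0 <= a -> a < b -> Q b < Q a.
Proof.
  intros G a b Ha Hab. pose proof (Q1_neg _ _ _ G) as QN.
  destruct G as (HQ & HQ1 & _).
  destruct (mvt Q Q1 a b Hab (fun c _ => HQ c)) as [c [Hc Hc2]].
  specialize (QN c ltac:(lra)). nra.
Qed.

Lemma main (Q Q1 Q2 H0 h1 p p1 : R -> R) (tau0 : R) :
  GS Q Q1 Q2 ->
  (forall t, is_derive H0 t (h1 t)) -> (forall t, is_derive h1 t (- (Q t ^ 2) * H0 t)) ->
  H0 0 = 0 -> h1 0 = -1 ->
  0 < tau0 -> H0 tau0 = 0 -> (forall t, 0 < t < tau0 -> H0 t <> 0) ->
  (forall t, is_derive p t (p1 t)) -> (forall t, is_derive p1 t (- (Q (t + tau0) ^ 2) * p t)) ->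
  p 0 = 0 -> p1 0 = 1 ->
  (forall t, 0 < t -> 0 < p t) /\
  (exists c1, 0 < c1 /\ forall t, 1 <= t -> c1 <= p t).
Proof.
  intros G HH0 Hh1 H00 H10 Ht0 HHt HHnz Hp Hp1 Hp0 Hp10.
  pose proof (Q_decr _ _ _ G) as QD.
  destruct G as (HQ & HQ1 & Hev & Hpos & Hlim & Hode).
  assert (G1 : forall t, 0 < t < tau0 -> H0 t < 0).
  { intros s Hs. destruct (Rtotal_order (H0 s) 0) as [|[E|Hsp]]; auto.
    - exfalso; apply (HHnz s Hs E).
    - exfalso. destruct (der_neg_right H0 0 _ (HH0 0) ltac:(lra)) as [d [Hd P]].
      assert (0 < Rmin d s) by (unfold Rmin; destruct Rle_dec; lra).
      pose proof (Rmin_l d s). pose proof (Rmin_r d s).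
      set (t0 := Rmin d s / 2).
      specialize (P t0 ltac:(unfold t0; lra)).
      destruct (IVT H0 t0 s (cont_of_der H0 h1 HH0) ltac:(unfold t0; lra) ltac:(lra) Hsp)
        as [z [Hz Hz2]].
      apply (HHnz z); auto. unfold t0 in Hz. lra. }
  assert (G2 : 0 <= h1 tau0).
  { destruct (Rle_lt_dec 0 (h1 tau0)) as [|Hn]; auto. exfalso.
    destruct (der_neg_left H0 tau0 _ (HH0 tau0) Hn) as [d [Hd P]].
    assert (0 < Rmin d tau0) by (unfold Rmin; destruct Rle_dec; lra).
    pose proof (Rmin_l d tau0). pose proof (Rmin_r d tau0).
    set (t := tau0 - Rmin d tau0 / 2).
    specialize (P t ltac:(unfold t; lra)). specialize (G1 t ltac:(unfold t; lra)). lra. }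
  set (mu := Q tau0).
  assert (Hmu : 0 < mu) by apply Hpos.
  set (W := fun t => h1 t * (t * (1 - mu * Q t)) - H0 t * (1 - mu * Q t - mu * t * Q1 t)).
  set (D := fun t => - (Q t ^ 2) * H0 t * (t * (1 - mu * Q t)) + H0 t * mu * (2 * Q1 t + t * Q2 t)).
  assert (HW : forall c, is_derive W c (D c)).
  { intros c. unfold W, D. auto_derive; [exD|]. fixD. ring. }
  assert (Hmu1 : mu * mu < 1).
  { destruct (mvt W D 0 tau0 Ht0 (fun c _ => HW c)) as [c [Hc Hc2]].
    assert (Dc : D c = - H0 c * c * Q c * (Q c - mu)).
    { unfold D. specialize (Hode c ltac:(lra)).
      assert (Q2 c = Q c - Q c ^ 3 - 2 / c * Q1 c) by lra.
      rewrite H. field. lra. }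
    assert (0 < D c).
    { rewrite Dc. specialize (G1 c Hc2). specialize (QD c tau0 ltac:(lra) ltac:(lra)).
      pose proof (Hpos c). fold mu in QD.
      assert (0 < - H0 c * c) by nra. assert (0 < Q c * (Q c - mu)) by nra. nra. }
    unfold W in Hc. rewrite H00, HHt in Hc. fold mu in Hc.
    assert (0 < h1 tau0 * (tau0 * (1 - mu * mu))) by nra.
    assert (0 <= h1 tau0 * tau0) by nra.
    destruct (Rlt_le_dec 0 (1 - mu * mu)); [lra|].
    assert ((h1 tau0 * tau0) * (1 - mu * mu) <= 0) by nra. nra. }
  set (gt := fun t => (t + tau0) * (1 - mu * Q (t + tau0))).
  set (gt' := fun t => 1 - mu * Q (t + tau0) - mu * (t + tau0) * Q1 (t + tau0)).
  set (Wp := fun t => p1 t * gt t - p t * gt' t).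
  set (Dp := fun t => - (Q (t + tau0) ^ 2) * p t * gt t + p t * mu * (2 * Q1 (t + tau0) + (t + tau0) * Q2 (t + tau0))).
  assert (Qle : forall t, 0 <= t -> Q (t + tau0) <= mu).
  { intros t Ht. destruct (Req_dec t 0) as [->|]. { rewrite Rplus_0_l; unfold mu; lra. }
    left. apply QD; lra. }
  assert (gpos : forall t, 0 <= t -> 0 < gt t).
  { intros t Ht. unfold gt. specialize (Qle t Ht).
    assert (mu * Q (t + tau0) <= mu * mu) by nra. nra. }
  assert (Dpe : forall t, 0 <= t -> Dp t = - p t * (t + tau0) * Q (t + tau0) * (Q (t + tau0) - mu)).
  { intros t Ht. unfold Dp, gt. specialize (Hode (t + tau0) ltac:(lra)).
    assert (Q2 (t + tau0) = Q (t + tau0) - Q (t + tau0) ^ 3 - 2 / (t + tau0) * Q1 (t + tau0)) by lra.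
    rewrite H. field. lra. }
  set (Phi := fun t => Wp t * (p t / gt t)).
  set (DPhi := fun t => Dp t * (p t / gt t) + Wp t ^ 2 / gt t ^ 2).
  assert (HPhi : forall t, 0 <= t -> is_derive Phi t (DPhi t)).
  { intros t Ht. specialize (gpos t Ht). unfold Phi, DPhi, Wp, Dp. unfold gt, gt' in *.
    auto_derive.
    - exD. lra.
    - fixD. field. split; intro E; rewrite E in *; nra. }
  assert (DPhi_nn : forall t, 0 <= t -> 0 <= DPhi t).
  { intros t Ht. unfold DPhi. rewrite (Dpe t Ht). specialize (gpos t Ht). specialize (Qle t Ht).
    pose proof (Hpos (t + tau0)).
    assert (0 <= Wp t ^ 2 / gt t ^ 2).
    { apply Rmult_le_pos; [nra|]. left; apply Rinv_0_lt_compat; nra. }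
    assert (0 <= - p t * (t + tau0) * Q (t + tau0) * (Q (t + tau0) - mu) * p t).
    { assert (0 <= (t + tau0) * Q (t + tau0) * (mu - Q (t + tau0))) by
        (apply Rmult_le_pos; [apply Rmult_le_pos|]; lra).
      assert (0 <= p t * p t) by nra. nra. }
    assert (0 <= - p t * (t + tau0) * Q (t + tau0) * (Q (t + tau0) - mu) * (p t / gt t)).
    { unfold Rdiv. rewrite <- Rmult_assoc. apply Rmult_le_pos; auto.
      left; apply Rinv_0_lt_compat; auto. }
    lra. }
  assert (Phi0 : Phi 0 = 0). { unfold Phi. rewrite Hp0. unfold Rdiv. ring. }
  assert (DPhi0 : 0 < DPhi 0).
  { unfold DPhi. rewrite Hp0. unfold Wp. rewrite Hp0, Hp10.
    specialize (gpos 0 ltac:(lra)).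
    replace ((1 * gt 0 - 0 * gt' 0) ^ 2 / gt 0 ^ 2) with 1 by (field; lra).
    unfold Rdiv. lra. }
  assert (PhiPos : forall t, 0 < t -> 0 < Phi t).
  { destruct (der_pos_right Phi 0 _ (HPhi 0 ltac:(lra)) DPhi0) as [d [Hd P]].
    intros t Ht. rewrite Phi0 in P.
    destruct (Rlt_le_dec t (d / 2)). { apply P; lra. }
    assert (Phi (d / 2) <= Phi t).
    { apply (mono_nonneg Phi DPhi); auto.
      - intros c Hc; apply HPhi; lra.
      - intros c Hc; apply DPhi_nn; lra. }
    specialize (P (d / 2) ltac:(lra)). lra. }
  assert (pnz : forall t, 0 < t -> p t <> 0).
  { intros t Ht E. specialize (PhiPos t Ht). unfold Phi in PhiPos. rewrite E in PhiPos.
    unfold Rdiv in PhiPos. lra. }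
  assert (ppos : forall t, 0 < t -> 0 < p t).
  { destruct (der_pos_right p 0 _ (Hp 0) ltac:(lra)) as [d [Hd P]]. rewrite Hp0 in P.
    intros s Hs. destruct (Rtotal_order (p s) 0) as [Hn|[E|]]; auto; exfalso.
    - assert (0 < Rmin d s) by (unfold Rmin; destruct Rle_dec; lra).
      pose proof (Rmin_l d s). pose proof (Rmin_r d s).
      set (t0 := Rmin d s / 2).
      specialize (P t0 ltac:(unfold t0; lra)).
      assert (Hc : continuity (fun t => - p t)).
      { apply (cont_of_der _ (fun t => - p1 t)). intros t. auto_derive; [exD|]. fixD. ring. }
      destruct (IVT (fun t => - p t) t0 s Hc ltac:(unfold t0; lra) ltac:(lra) ltac:(lra))
        as [z [Hz Hz2]].
      apply (pnz z); [unfold t0 in Hz; lra| lra].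
    - apply (pnz s Hs E). }
  split; auto.
  assert (p1dec : forall a b, 0 <= a <= b -> p1 b <= p1 a).
  { intros a b Hab. cut (- p1 a <= - p1 b); [lra|].
    apply (mono_nonneg (fun t => - p1 t) (fun t => Q (t + tau0) ^ 2 * p t)); [lra| |].
    - intros c _. auto_derive; [exD|]. fixD. ring.
    - intros c Hc. specialize (ppos c ltac:(lra)). pose proof (Hpos (c + tau0)). nra. }
  assert (p1nn : forall a, 0 <= a -> 0 <= p1 a).
  { intros a Ha. destruct (Rle_lt_dec 0 (p1 a)) as [|Hn]; auto. exfalso.
    set (k := p a / (- p1 a)).
    assert (Hk : k * (- p1 a) = p a) by (unfold k; field; lra).
    assert (0 <= p a) by (destruct (Req_dec a 0) as [->|]; [lra| left; apply ppos; lra]).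
    assert (0 <= k) by (unfold k, Rdiv; apply Rmult_le_pos; [lra| left; apply Rinv_0_lt_compat; lra]).
    set (T := a + k + 1).
    destruct (mvt p p1 a T ltac:(unfold T; lra) (fun c _ => Hp c)) as [c [Hc Hc2]].
    specialize (p1dec a c ltac:(lra)). specialize (ppos T ltac:(unfold T; lra)).
    assert (ET : T - a = k + 1) by (unfold T; ring). rewrite ET in Hc.
    assert (p1 c * (k + 1) <= p1 a * (k + 1)) by nra.
    assert (p1 a * (k + 1) = - p a + p1 a) by nra. lra. }
  exists (p 1). split; [apply ppos; lra|].
  intros t Ht. apply (mono_nonneg p p1); auto.
  intros c Hc. apply p1nn; lra.
Qed.


Theorem theorem7p1 (Q H0 p : R -> R) (tau0 : R) :
  is_ground_state_profile Q ->
  solves_ode (fun t => Q t ^ 2) H0 0 (-1) ->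
  0 < tau0 -> H0 tau0 = 0 -> (forall t, 0 < t < tau0 -> H0 t <> 0) ->
  solves_ode (fun t => Q (t + tau0) ^ 2) p 0 1 ->
  (forall t, 0 < t -> 0 < p t) /\
  (exists c1, 0 < c1 /\ forall t, 1 <= t -> c1 <= p t).
Proof.
  intros [Q1 [Q2 G]] [h1 (Hh & Hh1 & Hh0 & Hh10)] Ht0 HHt HHnz [p1 (Hp & Hp1 & Hp0 & Hp10)].
  exact (main Q Q1 Q2 H0 h1 p p1 tau0 G Hh Hh1 Hh0 Hh10 Ht0 HHt HHnz Hp Hp1 Hp0 Hp10).
Qed.
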